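(* Let $m\ge2$. For $\beta\in(\mathcal{G}(m),\beta_f(m)]$ one has $|S_{\beta,m}|=1$ if $m$ is even and $|S_{\beta,m}|=2$ if $m$ is odd; and $|S_{\beta,m}|\ge\aleph_0$ for $\beta\in(\beta_f(m),m+1]$.
   Context: For $\beta\in(1,m+1]$ and $x\in[0,\frac{m}{\beta-1}]$, $\Sigma_{\beta,m}(x)=\{(\epsilon_i)\in\{0,\ldots,m\}^{\mathbb{N}}:\sum_{i\ge1}\epsilon_i\beta^{-i}=x\}$. $W_{\beta,m}=\{x\in(\frac{m+1-\beta}{\beta-1},1):|\Sigma_{\beta,m}(x)|=1\}$ and $S_{\beta,m}=\{(\epsilon_i)\in\{0,\ldots,m\}^{\mathbb{N}}:\sum_{i\ge1}\epsilon_i\beta^{-i}\in W_{\beta,m}\}$. $\mathcal{G}(m)=k+1$ if $m=2k$ and $\mathcal{G}(m)=\frac{k+1+\sqrt{k^2+6k+5}}{2}$ if $m=2k+1$. $\beta_f(m)=\frac{k+1+\sqrt{k^2+6k+1}}{2}$ if $m=2k$, and $\beta_f(m)$ is the largest real root of $x^3-(k+2)x^2+x-(k+1)=0$ if $m=2k+1$. *)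

(* Defs.v *)
From Stdlib Require Import Reals.
From Coquelicot Require Import Coquelicot.
Open Scope R_scope.

(* A digit sequence (eps_i)_{i>=1} is represented by e : nat -> nat with
   e n = eps_{n+1}.  It lies in {0,...,m}^N iff every digit is <= m. *)
Definition digits (m : nat) (e : nat -> nat) : Prop := forall n, (e n <= m)%nat.

Definition term (beta : R) (e : nat -> nat) (n : nat) : R :=
  INR (e n) / beta ^ (S n).

Definition Sigma (beta : R) (m : nat) (x : R) (e : nat -> nat) : Prop :=
  digits m e /\ is_series (term beta e) x.

Definition W (beta : R) (m : nat) (x : R) : Prop :=
  (INR m + 1 - beta) / (beta - 1) < x /\ x < 1 /\
  exists e, Sigma beta m x e /\ forall e', Sigma beta m x e' -> e' = e.

Definition Sset (beta : R) (m : nat) (e : nat -> nat) : Prop :=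
  digits m e /\ exists x, is_series (term beta e) x /\ W beta m x.

Definition Gm (m : nat) : R :=
  let k := INR (Nat.div2 m) in
  if Nat.even m then k + 1
  else (k + 1 + sqrt (k ^ 2 + 6 * k + 5)) / 2.

Definition is_beta_f (m : nat) (b : R) : Prop :=
  let k := INR (Nat.div2 m) in
  if Nat.even m then b = (k + 1 + sqrt (k ^ 2 + 6 * k + 1)) / 2
  else (b ^ 3 - (k + 2) * b ^ 2 + b - (k + 1) = 0 /\
        forall y, y ^ 3 - (k + 2) * y ^ 2 + y - (k + 1) = 0 -> y <= b).

Definition card_is_one (P : (nat -> nat) -> Prop) : Prop :=
  exists e, P e /\ forall e', P e' -> e' = e.

Definition card_is_two (P : (nat -> nat) -> Prop) : Prop :=
  exists e1 e2, e1 <> e2 /\ P e1 /\ P e2 /\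
    forall e, P e -> e = e1 \/ e = e2.

Definition at_least_countable (P : (nat -> nat) -> Prop) : Prop :=
  exists f : nat -> (nat -> nat),
    (forall i j, f i = f j -> i = j) /\ forall i, P (f i).

(* Main.v *)
Require Import Defs.
From Stdlib Require Import Reals Lra Lia Psatz FunctionalExtensionality Arith.
From Coquelicot Require Import Coquelicot.
Open Scope R_scope.

Definition val (b : R) (e : nat -> nat) : R := Series (term b e).
Definition sh (e : nat -> nat) : nat -> nat := fun n => e (S n).
Definition tl (e : nat -> nat) (n : nat) : nat -> nat := fun i => e (n + i)%nat.

Lemma tl0 e : tl e 0 = e.
Proof. apply functional_extensionality; intro; reflexivity. Qed.
Lemma tlS e n : tl e (S n) = sh (tl e n).
Proof. apply functional_extensionality; intro i; unfold tl, sh; f_equal; lia. Qed.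

Lemma term_bound b m e n : 1 < b -> digits m e ->
  0 <= term b e n <= (INR m / b) * (/ b) ^ n.
Proof.
  intros Hb Hd. unfold term.
  assert (Hp: 0 < b ^ n) by (apply pow_lt; lra).
  assert (E: INR m / b * (/ b) ^ n = INR m / b ^ (S n)).
  { rewrite pow_inv. simpl. field. split; lra. }
  rewrite E. assert (0 < b ^ S n) by (apply pow_lt; lra).
  assert (INR (e n) <= INR m) by (apply le_INR; apply Hd).
  assert (0 <= INR (e n)) by apply pos_INR.
  split; unfold Rdiv.
  - apply Rmult_le_pos; [lra| left; apply Rinv_0_lt_compat; lra].
  - apply Rmult_le_compat_r; [left; apply Rinv_0_lt_compat; lra| lra].
Qed.

Lemma inv_lt1 b : 1 < b -> / b < 1.
Proof. intros. rewrite <- Rinv_1. apply Rinv_lt_contravar; lra. Qed.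

Lemma ex_geo b c : 1 < b -> ex_series (fun n => c * (/ b) ^ n).
Proof.
  intros Hb. apply (ex_series_scal_l c (fun n => (/b)^n)).
  apply ex_series_geom. rewrite Rabs_right.
  - apply inv_lt1; lra. 
  - left; apply Rinv_0_lt_compat; lra.
Qed.

Lemma ex_val b m e : 1 < b -> digits m e -> ex_series (term b e).
Proof.
  intros Hb Hd. apply (@ex_series_le R_AbsRing R_CompleteNormedModule _ (fun n => (INR m / b) * (/ b) ^ n)).
  - intro n. unfold norm; simpl. unfold abs; simpl. rewrite Rabs_right.
    + apply term_bound; auto.
    + apply Rle_ge. apply (term_bound b m e n); auto.
  - apply ex_geo; auto.
Qed.

Lemma val_bounds b m e : 1 < b -> digits m e -> 0 <= val b e <= INR m / (b - 1).
Proof.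
  intros Hb Hd. unfold val. split.
  - assert (Z: Series (fun n => 0 * term b e n) = 0).
    { rewrite Series_scal_l. ring. }
    rewrite <- Z. apply Series_le.
    + intro n; split; [lra| ]. rewrite Rmult_0_l. apply (term_bound b m e n); auto.
    + apply ex_val with m; auto.
  - replace (INR m / (b-1)) with (Series (fun n => (INR m / b) * (/ b) ^ n)).
    + apply Series_le.
      * intro n; apply term_bound; auto.
      * apply ex_geo; auto.
    + rewrite Series_scal_l, Series_geom.
      * field. lra.
      * rewrite Rabs_right. apply inv_lt1; lra. left; apply Rinv_0_lt_compat; lra.
Qed.

Lemma val_step b m e : 1 < b -> digits m e -> b * val b e = INR (e 0%nat) + val b (sh e).
Proof.
  intros Hb Hd. unfold val. rewrite Series_incr_1 by (apply ex_val with m; auto).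
  rewrite (Series_ext _ (fun k => / b * term b (sh e) k)).
  - rewrite Series_scal_l. unfold term at 1. simpl. field. lra.
  - intro k. unfold term, sh. simpl. field. split; [|lra]. apply pow_nonzero; lra.
Qed.

Lemma Sigma_val b m x e : 1 < b -> (Sigma b m x e <-> digits m e /\ x = val b e).
Proof.
  intros Hb; split.
  - intros [Hd Hs]. split; auto. symmetry. apply is_series_unique. auto.
  - intros [Hd ->]. split; auto. apply Series_correct. apply ex_val with m; auto.
Qed.

Lemma digits_tl m c n : digits m c -> digits m (tl c n).
Proof. intros H i; apply H. Qed.

Lemma val_tl_step b m c n : 1 < b -> digits m c ->
  b * val b (tl c n) = INR (c n) + val b (tl c (S n)).
Proof.
  intros Hb Hd. rewrite (val_step b m) by (auto using digits_tl).
  rewrite tlS. unfold tl. rewrite Nat.add_0_r. reflexivity.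
Qed.

Lemma pow_big b n : 1 < b -> 1 + INR n * (b - 1) <= b ^ n.
Proof. intros. replace b with (1 + (b-1)) at 2 by ring. apply poly; lra. Qed.

Lemma orbit0 b m c y B : 1 < b -> digits m c ->
  (forall n, b * y n = INR (c n) + y (S n)) -> (forall n, Rabs (y n) <= B) ->
  y 0%nat = val b c.
Proof.
  intros Hb Hd Hy HB.
  set (M := INR m / (b - 1)).
  set (d := fun n => y n - val b (tl c n)).
  assert (Hdn : forall n, d n = b ^ n * d 0%nat).
  { induction n. simpl; ring.
    replace (b ^ S n * d 0%nat) with (b * (b ^ n * d 0%nat)) by (simpl; ring).
    rewrite <- IHn. unfold d.
    pose proof (val_tl_step b m c n Hb Hd). specialize (Hy n). lra. }
  assert (Hbd : forall n, Rabs (d n) <= B + M).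
  { intro n. unfold d. pose proof (val_bounds b m (tl c n) Hb (digits_tl m c n Hd)).
    specialize (HB n). unfold M in *. 
    apply Rabs_le. apply Rabs_le_between in HB. lra. }
  assert (d 0%nat = 0).
  { destruct (Req_dec (d 0%nat) 0) as [E|E]; auto. exfalso.
    assert (Ha : 0 < Rabs (d 0%nat)) by (apply Rabs_pos_lt; auto).
    destruct (INR_unbounded ((B + M) / (Rabs (d 0%nat) * (b - 1)))) as [n Hn].
    specialize (Hbd n). rewrite Hdn, Rabs_mult, Rabs_right in Hbd
      by (apply Rle_ge, pow_le; lra).
    pose proof (pow_big b n Hb).
    assert (INR n * (Rabs (d 0%nat) * (b - 1)) > B + M).
    { apply Rmult_gt_compat_r with (r := Rabs (d 0%nat) * (b-1)) in Hn.
      unfold Rdiv in Hn. rewrite Rmult_assoc, Rinv_l in Hn. lra.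
      apply Rgt_not_eq. apply Rmult_gt_0_compat; lra.
      apply Rmult_gt_0_compat; lra. }
    nra. }
  unfold d in H. rewrite tl0 in H. lra.
Qed.

Lemma tl_tl c n i : tl (tl c n) i = tl c (n + i).
Proof. apply functional_extensionality; intro j; unfold tl; f_equal; lia. Qed.

Lemma orbit b m c y B : 1 < b -> digits m c ->
  (forall n, b * y n = INR (c n) + y (S n)) -> (forall n, Rabs (y n) <= B) ->
  forall n, y n = val b (tl c n).
Proof.
  intros Hb Hd Hy HB n. rewrite <- (Nat.add_0_r n) at 1.
  apply (orbit0 b m (tl c n) (fun i => y (n + i)%nat) B Hb (digits_tl m c n Hd)).
  - intro i. replace (n + S i)%nat with (S (n + i)) by lia. apply Hy.
  - intro i; apply HB.
Qed.

Fixpoint cnt (m : nat) (z : R) : nat :=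
  match m with O => O | S p => if Rle_dec (INR (S p)) z then S p else cnt p z end.

Lemma cnt_le m z : (cnt m z <= m)%nat.
Proof. induction m; simpl; auto. destruct Rle_dec; lia. Qed.

Lemma cnt_low m z : 0 <= z -> INR (cnt m z) <= z.
Proof. intros Hz; induction m; simpl. lra. destruct Rle_dec; auto. Qed.

Lemma cnt_high m z : (cnt m z < m)%nat -> z < INR (cnt m z) + 1.
Proof.
  induction m; cbn [cnt]; intros H. lia.
  destruct Rle_dec as [h|h]. lia.
  pose proof (cnt_le m z).
  destruct (Nat.eq_dec (cnt m z) m) as [E|E].
  - rewrite E. rewrite S_INR in h. lra.
  - apply IHm. lia.
Qed.

Lemma greedy b m y : 1 < b -> b <= INR m + 1 -> 0 <= y <= INR m / (b - 1) ->
  exists g, digits m g /\ val b g = y.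
Proof.
  intros Hb Hbm Hy.
  set (M := INR m / (b - 1)).
  assert (HM : M * (b - 1) = INR m) by (unfold M; field; lra).
  assert (HM1 : 1 <= M).
  { apply Rmult_le_reg_r with (b - 1). lra. rewrite HM. lra. }
  set (rem := fix rem n := match n with O => y | S n => b * rem n - INR (cnt m (b * rem n)) end).
  set (g := fun n => cnt m (b * rem n)).
  assert (Hinv : forall n, 0 <= rem n <= M).
  { induction n. simpl. exact Hy.
    change (rem (S n)) with (b * rem n - INR (cnt m (b * rem n))).
    assert (0 <= b * rem n) by nra.
    pose proof (cnt_low m (b * rem n) H).
    pose proof (cnt_le m (b * rem n)).
    destruct (Nat.eq_dec (cnt m (b * rem n)) m) as [E|E].
    - rewrite E in *. split. lra. assert (b * rem n <= b * M) by (apply Rmult_le_compat_l; lra). lra.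
    - pose proof (cnt_high m (b * rem n) ltac:(lia)). lra. }
  exists g. split.
  - intro n; apply cnt_le.
  - rewrite <- (tl0 g). symmetry.
    rewrite <- (orbit b m g rem M Hb (fun n => cnt_le m _)).
    + reflexivity.
    + intro n. change (rem (S n)) with (b * rem n - INR (cnt m (b * rem n))). unfold g. ring.
    + intro n. rewrite Rabs_right; [apply Hinv| apply Rle_ge, Hinv].
Qed.

Definition Lb b m := (INR m + 1 - b) / (b - 1).
Definition goodJ b m c := forall n, Lb b m < val b (tl c n) < 1.

Lemma LbM b m : 1 < b -> INR m / (b - 1) = Lb b m + 1.
Proof. intros. unfold Lb. field. lra. Qed.

Lemma Lb_nonneg b m : 1 < b -> b <= INR m + 1 -> 0 <= Lb b m.
Proof. intros. unfold Lb. apply Rmult_le_pos. lra. left; apply Rinv_0_lt_compat; lra. Qed.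

Lemma nat_gap (a c : nat) : (a < c)%nat -> INR a + 1 <= INR c.
Proof. intros. rewrite <- S_INR. apply le_INR. lia. Qed.

Lemma U1_step b m c d n : 1 < b -> b <= INR m + 1 -> digits m c -> goodJ b m c -> digits m d ->
  val b (tl d n) = val b (tl c n) -> d n = c n /\ val b (tl d (S n)) = val b (tl c (S n)).
Proof.
  intros Hb Hbm Hc HJ Hd Hv.
  pose proof (val_tl_step b m c n Hb Hc). pose proof (val_tl_step b m d n Hb Hd).
  pose proof (HJ (S n)). pose proof (val_bounds b m (tl d (S n)) Hb (digits_tl m d (S n) Hd)).
  rewrite LbM in H2 by lra.
  destruct (lt_eq_lt_dec (c n) (d n)) as [[h|h]|h].
  - apply nat_gap in h. exfalso. rewrite Hv in H0. lra.
  - split; auto. rewrite h, Hv in *. lra.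
  - apply nat_gap in h. exfalso. rewrite Hv in H0. lra.
Qed.

Lemma U1 b m c : 1 < b -> b <= INR m + 1 -> digits m c -> goodJ b m c ->
  forall d, digits m d -> val b d = val b c -> d = c.
Proof.
  intros Hb Hbm Hc HJ d Hd Hv.
  assert (Ht : forall n, val b (tl d n) = val b (tl c n)).
  { induction n as [|n IH]. rewrite !tl0; auto.
    apply (U1_step b m c d n); auto. }
  apply functional_extensionality; intro n. apply (U1_step b m c d n); auto.
Qed.

Definition splice (c : nat -> nat) n a (g : nat -> nat) : nat -> nat :=
  fun i => if (i <? n)%nat then c i else if (i =? n)%nat then a else g (i - S n)%nat.

Lemma splice_val b m c n a g : 1 < b -> digits m c -> digits m g -> (a <= m)%nat ->
  b * val b (tl c n) = INR a + val b g ->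
  digits m (splice c n a g) /\ val b (splice c n a g) = val b c.
Proof.
  intros Hb Hc Hg Ha Hv.
  assert (Hd : digits m (splice c n a g)).
  { intro i; unfold splice. destruct (i <? n)%nat; auto. destruct (i =? n)%nat; auto. }
  split; auto.
  set (y := fun i => if (i <=? n)%nat then val b (tl c i) else val b (tl g (i - S n))).
  assert (E := orbit b m (splice c n a g) y (INR m / (b - 1)) Hb Hd).
  rewrite <- (tl0 (splice c n a g)). rewrite <- E.
  - unfold y. simpl. rewrite tl0. reflexivity.
  - intro i. unfold y, splice.
    destruct (Nat.ltb_spec i n).
    + replace (i <=? n)%nat with true by (symmetry; apply Nat.leb_le; lia).
      replace (S i <=? n)%nat with true by (symmetry; apply Nat.leb_le; lia).
      apply val_tl_step with m; auto.
    + destruct (Nat.eqb_spec i n).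
      * subst i. rewrite Nat.leb_refl.
        replace (S n <=? n)%nat with false by (symmetry; apply Nat.leb_gt; lia).
        rewrite Nat.sub_diag, tl0. auto.
      * replace (i <=? n)%nat with false by (symmetry; apply Nat.leb_gt; lia).
        replace (S i <=? n)%nat with false by (symmetry; apply Nat.leb_gt; lia).
        replace (S i - S n)%nat with (S (i - S n)) by lia.
        pose proof (val_tl_step b m g (i - S n) Hb Hg) as HH. exact HH.
  - intro i. unfold y. destruct (i <=? n)%nat;
    [pose proof (val_bounds b m _ Hb (digits_tl m c i Hc))
    |pose proof (val_bounds b m _ Hb (digits_tl m g (i - S n) Hg))];
    rewrite Rabs_right; lra.
Qed.

Lemma splice_at c n a g : splice c n a g n = a.
Proof. unfold splice. rewrite Nat.ltb_irrefl, Nat.eqb_refl. reflexivity. Qed.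

Lemma U2 b m c : 1 < b -> b <= INR m + 1 -> digits m c ->
  Lb b m < val b c < 1 ->
  (forall d, digits m d -> val b d = val b c -> d = c) -> goodJ b m c.
Proof.
  intros Hb Hbm Hc Hx Hu n. induction n as [|n IH]. rewrite tl0; auto.
  pose proof (val_tl_step b m c n Hb Hc) as Hs.
  pose proof (val_bounds b m (tl c (S n)) Hb (digits_tl m c (S n) Hc)) as Hv'.
  rewrite LbM in Hv' by lra. pose proof (Lb_nonneg b m Hb Hbm) as HL.
  set (v := val b (tl c n)) in *. set (v' := val b (tl c (S n))) in *.
  pose proof (Hc n) as Hcn.
  split.
  - destruct (Rle_lt_dec v' (Lb b m)) as [h|h]; auto. exfalso.
    destruct (Nat.eq_dec (c n) 0) as [E|E].
    + rewrite E in Hs. simpl in Hs. nra.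
    + destruct (greedy b m (v' + 1) Hb Hbm) as [g [Hg Hgv]].
      { rewrite LbM by lra. lra. }
      destruct (splice_val b m c n (c n - 1) g Hb Hc Hg ltac:(lia)) as [Hd Hdv].
      { rewrite minus_INR by lia. simpl. fold v. lra. }
      pose proof (Hu _ Hd Hdv) as Q. apply (f_equal (fun f => f n)) in Q.
      rewrite splice_at in Q. lia.
  - destruct (Rlt_le_dec v' 1) as [h|h]; auto. exfalso.
    destruct (Nat.eq_dec (c n) m) as [E|E].
    + rewrite E in Hs. nra.
    + destruct (greedy b m (v' - 1) Hb Hbm) as [g [Hg Hgv]].
      { rewrite LbM by lra. lra. }
      destruct (splice_val b m c n (S (c n)) g Hb Hc Hg ltac:(lia)) as [Hd Hdv].
      { rewrite S_INR. fold v. lra. }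
      pose proof (Hu _ Hd Hdv) as Q. apply (f_equal (fun f => f n)) in Q.
      rewrite splice_at in Q. lia.
Qed.

Lemma KeyS b m c : 1 < b -> b <= INR m + 1 -> digits m c ->
  (Sset b m c <-> goodJ b m c).
Proof.
  intros Hb Hbm Hc. split.
  - intros [_ [x [Hs [Hl [Hr [e [He Hu]]]]]]].
    assert (Hx : x = val b c) by (symmetry; apply is_series_unique; auto).
    assert (Hce : c = e) by (apply Hu; split; auto).
    apply U2; auto.
    + rewrite <- Hx. split; auto.
    + intros d Hd Hdv. rewrite Hce. apply Hu. apply Sigma_val; auto. split; auto. lra.
  - intros HJ. split; auto. exists (val b c). split.
    + apply Series_correct. apply ex_val with m; auto.
    + pose proof (HJ 0%nat) as H0. rewrite tl0 in H0. split; [apply H0|]. split; [apply H0|].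
      exists c. split. apply Sigma_val; auto.
      intros e' He'. apply Sigma_val in He'; auto. destruct He' as [Hd' Hv'].
      apply (U1 b m c); auto.
Qed.

Lemma even_Q_le K s b : 1 <= K -> 0 <= s -> s * s = K^2 + 6*K + 1 ->
  K + 1 < b -> b <= (K + 1 + s) / 2 -> b^2 - (K+1)*b - K <= 0 /\ b <= 2*K+1.
Proof.
  intros HK Hs Hss H1 H2.
  assert (s <= 3*K+1) by nra.
  split; [|lra].
  assert (s >= K + 1) by nra.
  assert (b^2 - (K+1)*b - K = (b - (K+1+s)/2) * (b - (K+1-s)/2)) by (field_simplify; nra).
  assert (0 <= ((K+1+s)/2 - b) * (b - (K+1-s)/2)) by (apply Rmult_le_pos; lra). lra.
Qed.

Lemma even_Q_gt K s b : 1 <= K -> 0 <= s -> s * s = K^2 + 6*K + 1 ->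
  (K + 1 + s) / 2 < b -> b^2 - (K+1)*b - K > 0.
Proof.
  intros HK Hs Hss H2.
  assert (s >= K + 1) by nra.
  assert (b^2 - (K+1)*b - K = (b - (K+1+s)/2) * (b - (K+1-s)/2)) by (field_simplify; nra).
  assert (0 < (b - (K+1+s)/2) * (b - (K+1-s)/2)) by (apply Rmult_lt_0_compat; lra). lra.
Qed.

Lemma odd_H1 K s b : 0 <= K -> 0 <= s -> s * s = K^2 + 6*K + 5 ->
  (K + 1 + s) / 2 < b -> b^2 - (K+1)*b - (K+1) > 0 /\ K + 3/2 < b.
Proof.
  intros HK Hs Hss H2.
  assert (s > K + 2) by nra.
  split; [|lra].
  assert (b^2 - (K+1)*b - (K+1) = (b - (K+1+s)/2) * (b - (K+1-s)/2)) by (field_simplify; nra).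
  assert (0 < (b - (K+1+s)/2) * (b - (K+1-s)/2)) by (apply Rmult_lt_0_compat; lra). lra.
Qed.

Definition Pc K y := y^3 - (K+2)*y^2 + y - (K+1).

Lemma odd_P_le K b bf : 0 <= K -> Pc K bf = 0 -> K + 3/2 < b -> b <= bf -> Pc K b <= 0.
Proof.
  intros HK H0 Hb Hbf. unfold Pc in *.
  assert (Pc K bf - Pc K b = (bf - b) * (bf^2 + bf*b + b^2 - (K+2)*(bf+b) + 1)) by (unfold Pc; ring).
  unfold Pc in H.
  assert (0 < (bf - 1/2) * (b - 1/2)) by (apply Rmult_lt_0_compat; lra).
  assert (bf^2 + bf*b + b^2 - (K+2)*(bf+b) + 1 >= (bf - 1/2) * (b - 1/2) + 3/4) by nra.
  assert (0 <= (bf - b) * (bf^2 + bf*b + b^2 - (K+2)*(bf+b) + 1)) by (apply Rmult_le_pos; lra).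
  lra.
Qed.

Lemma Pc_cont K : continuity (Pc K).
Proof. unfold Pc. reg. Qed.

Lemma odd_P_gt K b bf : 0 <= K -> (forall y, Pc K y = 0 -> y <= bf) -> bf < b -> K + 1 < b -> 0 < Pc K b.
Proof.
  intros HK Hmax Hb Hb1.
  destruct (Rlt_le_dec b (K+2)) as [h|h].
  - destruct (Rlt_le_dec 0 (Pc K b)) as [p|p]; auto. exfalso.
    destruct p as [p|p].
    + assert (0 < Pc K (K+2)) by (replace (Pc K (K+2)) with 1 by (unfold Pc; ring); lra).
      destruct (IVT (Pc K) b (K+2) (Pc_cont K) h p H) as [z [Hz1 Hz2]].
      apply Hmax in Hz2. lra.
    + apply Hmax in p. lra.
  - unfold Pc. assert (0 <= b^2 * (b - (K+2))) by (apply Rmult_le_pos; nra). nra.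
Qed.

Lemma even_step_hi K L b v v' C : 1 < b -> b^2 - (K+1)*b - K <= 0 -> L*(b-1) = 2*K+1-b ->
  v < 1 -> L < v' -> b * v = C + v' -> K + 1 <= C -> False.
Proof.
  intros. assert (b * v < b * 1) by (apply Rmult_lt_compat_l; lra).
  assert (L * (b-1) < (b - K - 1) * (b - 1)) by (apply Rmult_lt_compat_r; lra). nra.
Qed.

Lemma even_step_lo K L b v v' C : 1 < b -> b^2 - (K+1)*b - K <= 0 -> L*(b-1) = 2*K+1-b ->
  L < v -> v' < 1 -> b * v = C + v' -> C <= K - 1 -> False.
Proof.
  intros. assert (b * L < b * v) by (apply Rmult_lt_compat_l; lra).
  assert (b * L * (b-1) < K * (b - 1)) by (apply Rmult_lt_compat_r; lra). nra.
Qed.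

Lemma odd_step_hi K L b v v' C : 1 < b -> 0 <= L -> b < K + 2 ->
  v < 1 -> L < v' -> b * v = C + v' -> K + 2 <= C -> False.
Proof. intros. assert (b * v < b * 1) by (apply Rmult_lt_compat_l; lra). lra. Qed.

Lemma odd_step_lo K L b v v' C : 1 < b -> b < K + 2 -> L*(b-1) = 2*K+2-b ->
  L < v -> v' < 1 -> b * v = C + v' -> C <= K - 1 -> 0 <= K -> False.
Proof.
  intros. assert (b * L < b * v) by (apply Rmult_lt_compat_l; lra).
  assert (b * L * (b-1) < K * (b - 1)) by (apply Rmult_lt_compat_r; lra). nra.
Qed.

Lemma odd_pair_hi K L b v0 v1 v2 : 1 < b -> Pc K b <= 0 -> L*(b-1) = 2*K+2-b ->
  v0 < 1 -> L < v2 -> b * v0 = K + 1 + v1 -> b * v1 = K + 1 + v2 -> False.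
Proof.
  unfold Pc. intros. assert (b * v0 < b * 1) by (apply Rmult_lt_compat_l; lra).
  assert (b * v1 < b * (b - K - 1)) by (apply Rmult_lt_compat_l; lra).
  assert (L * (b-1) < (b * (b - K - 1) - K - 1) * (b - 1)) by (apply Rmult_lt_compat_r; lra). nra.
Qed.

Lemma odd_pair_lo K L b v0 v1 v2 : 1 < b -> Pc K b <= 0 -> L*(b-1) = 2*K+2-b ->
  L < v0 -> v2 < 1 -> b * v0 = K + v1 -> b * v1 = K + v2 -> False.
Proof.
  unfold Pc. intros. assert (b * L < b * v0) by (apply Rmult_lt_compat_l; lra).
  assert (b * (b * L - K) < b * v1) by (apply Rmult_lt_compat_l; lra).
  assert ((b * (b * L - K) - K) * (b - 1) < 1 * (b - 1)) by (apply Rmult_lt_compat_r; lra). nra.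
Qed.

Lemma goodJ_orbit b m c y : 1 < b -> b <= INR m + 1 -> digits m c ->
  (forall n, b * y n = INR (c n) + y (S n)) -> (forall n, Lb b m < y n < 1) -> goodJ b m c.
Proof.
  intros Hb Hbm Hc Hy HJ n. pose proof (Lb_nonneg b m Hb Hbm).
  rewrite <- (orbit b m c y 1 Hb Hc Hy). apply HJ.
  intro i. specialize (HJ i). rewrite Rabs_right; lra.
Qed.

Lemma even_S n : Nat.even (S n) = negb (Nat.even n).
Proof. rewrite Nat.even_succ, Nat.negb_even. reflexivity. Qed.

Lemma m_even m : Nat.even m = true -> m = (2 * Nat.div2 m)%nat.
Proof. intros H. rewrite (Nat.div2_odd m) at 1. rewrite <- Nat.negb_even, H. simpl. lia. Qed.

Lemma m_odd m : Nat.even m = false -> m = (2 * Nat.div2 m + 1)%nat.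
Proof. intros H. rewrite (Nat.div2_odd m) at 1. rewrite <- Nat.negb_even, H. simpl. lia. Qed.

Lemma Lb_eq b m : 1 < b -> Lb b m * (b - 1) = INR m + 1 - b.
Proof. intros. unfold Lb. field. lra. Qed.

Lemma lt_by_mul x y b : 1 < b -> x * (b - 1) < y * (b - 1) -> x < y.
Proof. intros. apply Rmult_lt_reg_r with (b - 1); lra. Qed.

Lemma part1_even m k b : m = (2 * k)%nat -> (1 <= k)%nat ->
  INR k + 1 < b -> b^2 - (INR k + 1) * b - INR k <= 0 -> b <= 2 * INR k + 1 ->
  card_is_one (Sset b m).
Proof.
  intros Hm Hk Hb1 HQ Hb2.
  set (K := INR k) in *.
  assert (HK : 1 <= K) by (unfold K; apply (le_INR 1); auto).
  assert (HmK : INR m = 2 * K) by (rewrite Hm, mult_INR; simpl; unfold K; ring).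
  assert (Hb : 1 < b) by lra. assert (Hbm : b <= INR m + 1) by lra.
  pose proof (Lb_eq b m Hb) as HL. rewrite HmK in HL. set (L := Lb b m) in *.
  assert (Hdig : forall c, (forall n, c n = k) -> digits m c) by (intros c Hc n; rewrite Hc; lia).
  exists (fun _ => k). split.
  - apply (proj2 (KeyS b m _ Hb Hbm (Hdig _ (fun _ => eq_refl)))).
    set (t := K / (b - 1)).
    assert (Ht : t * (b - 1) = K) by (unfold t; field; lra).
    apply goodJ_orbit with (fun _ => t); auto.
    + intro n. fold K. nra.
    + intro n. split; apply lt_by_mul with b; auto; change (Lb b m) with L; rewrite ?Ht, ?HL; lra.
  - intros e Hs. pose proof (proj1 Hs) as He. apply (KeyS b m e Hb Hbm He) in Hs.
    apply functional_extensionality; intro n.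
    pose proof (val_tl_step b m e n Hb He) as St.
    pose proof (Hs n) as J0. pose proof (Hs (S n)) as J1. fold L in J0, J1.
    destruct (lt_eq_lt_dec (e n) k) as [[h|h]|h]; auto; apply nat_gap in h; fold K in h; exfalso.
    + apply (even_step_lo K L b _ _ (INR (e n)) Hb HQ HL ltac:(apply J0) ltac:(apply J1) St). lra.
    + apply (even_step_hi K L b _ _ (INR (e n)) Hb HQ HL ltac:(apply J0) ltac:(apply J1) St). lra.
Qed.

Definition alt (p q : nat) n := if Nat.even n then p else q.

Lemma alt_S p q n : alt p q (S n) = alt q p n.
Proof. unfold alt. rewrite even_S. destruct (Nat.even n); reflexivity. Qed.

Lemma part1_odd m k b : m = (2 * k + 1)%nat -> (1 <= k)%nat ->
  b^2 - (INR k + 1) * b - (INR k + 1) > 0 -> Pc (INR k) b <= 0 ->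
  INR k + 1 < b -> b < INR k + 2 ->
  card_is_two (Sset b m).
Proof.
  intros Hm Hk H1 HP Hb1 Hb2.
  set (K := INR k) in *.
  assert (HK : 1 <= K) by (unfold K; apply (le_INR 1); auto).
  assert (HmK : INR m = 2 * K + 1) by (rewrite Hm, plus_INR, mult_INR; simpl; unfold K; ring).
  assert (Hb : 1 < b) by lra. assert (Hbm : b <= INR m + 1) by lra.
  pose proof (Lb_eq b m Hb) as HL. rewrite HmK in HL. set (L := Lb b m) in *.
  assert (HL0 : 0 <= L) by (apply Lb_nonneg; auto).
  replace (2 * K + 1 + 1 - b) with (2 * K + 2 - b) in HL by ring.
  set (t := (2 * K + 1) / (2 * (b - 1))).
  assert (Ht : t * (b - 1) = K + 1/2) by (unfold t; field; lra).
  set (a := 1 / (2 * (b + 1))).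
  assert (Ha : a * (b + 1) = 1/2) by (unfold a; field; lra).
  assert (Ha0 : 0 < a) by (unfold a; apply Rdiv_lt_0_compat; lra).
  assert (Hta : (t + a) * (b - 1) < 1 * (b - 1)).
  { assert ((t + a) * (b - 1) * (b + 1) < (b - 1) * (b + 1)).
    { replace ((t + a) * (b - 1) * (b + 1)) with ((K + 1/2) * (b + 1) + (b - 1) * (a * (b+1)))
        by (rewrite <- Ht; ring). rewrite Ha. nra. }
    apply Rmult_lt_reg_r with (b + 1); lra. }
  assert (HLa : L * (b - 1) < (t - a) * (b - 1)).
  { replace ((t - a) * (b - 1)) with (2 * (t * (b - 1)) - (t + a) * (b - 1)) by ring.
    rewrite Ht, HL. lra. }
  assert (Hdig : forall p q, (p <= m)%nat -> (q <= m)%nat -> digits m (alt p q)).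
  { intros p q Hp Hq n. unfold alt. destruct (Nat.even n); auto. }
  assert (Galt : forall p q s, (p <= m)%nat -> (q <= m)%nat ->
     INR p = K + 1/2 + s/2 -> INR q = K + 1/2 - s/2 -> s * s = 1 ->
     goodJ b m (alt p q)).
  { intros p q s Hp Hq Ep Eq Hs.
    apply goodJ_orbit with (fun n => if Nat.even n then t + s * a else t - s * a); auto.
    - intro n. assert (s * (a * (b + 1)) = s * (1/2)) by (rewrite Ha; ring). unfold alt. rewrite even_S. destruct (Nat.even n); simpl; rewrite ?Ep, ?Eq; lra.
    - intro n. change (Lb b m) with L.
      assert (s = 1 \/ s = -1) by nra.
      destruct (Nat.even n); destruct H as [-> | ->]; split; apply lt_by_mul with b; auto; nra. }
  assert (G1 : goodJ b m (alt (k+1) k)).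
  { apply Galt with 1; try lia; try (rewrite ?plus_INR; simpl; fold K); lra. }
  assert (G2 : goodJ b m (alt k (k+1))).
  { apply Galt with (-1); try lia; try (rewrite ?plus_INR; simpl; fold K); lra. }
  exists (alt (k+1) k), (alt k (k+1)). split; [|split; [|split]].
  - intro E. apply (f_equal (fun f => f 0%nat)) in E. unfold alt in E. simpl in E. lia.
  - apply (proj2 (KeyS b m _ Hb Hbm (Hdig (k+1)%nat k ltac:(lia) ltac:(lia)))). auto.
  - apply (proj2 (KeyS b m _ Hb Hbm (Hdig k (k+1)%nat ltac:(lia) ltac:(lia)))). auto.
  - intros e Hs. pose proof (proj1 Hs) as He. apply (KeyS b m e Hb Hbm He) in Hs.
    assert (D1 : forall n, e n = k \/ e n = (k + 1)%nat).
    { intro n. pose proof (val_tl_step b m e n Hb He) as St.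
      pose proof (Hs n) as J0. pose proof (Hs (S n)) as J1. fold L in J0, J1.
      destruct (lt_eq_lt_dec (e n) k) as [[h|h]|h]; auto.
      - apply nat_gap in h; fold K in h; exfalso.
        apply (odd_step_lo K L b _ _ (INR (e n)) Hb Hb2 HL ltac:(apply J0) ltac:(apply J1) St); lra.
      - destruct (Nat.eq_dec (e n) (k+1)) as [E|E]; auto.
        assert (h2 : (k + 1 < e n)%nat) by lia. apply nat_gap in h2.
        rewrite plus_INR in h2; simpl in h2; fold K in h2; exfalso.
        apply (odd_step_hi K L b _ _ (INR (e n)) Hb HL0 Hb2 ltac:(apply J0) ltac:(apply J1) St); lra. }
    assert (D2 : forall n, e (S n) <> e n).
    { intros n E.
      pose proof (val_tl_step b m e n Hb He) as S0.
      pose proof (val_tl_step b m e (S n) Hb He) as S1.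
      pose proof (Hs n) as J0. pose proof (Hs (S (S n))) as J2. fold L in J0, J2.
      rewrite E in S1.
      destruct (D1 n) as [F|F]; rewrite F in S0, S1.
      - apply (odd_pair_lo K L b _ _ _ Hb HP HL ltac:(apply J0) ltac:(apply J2) S0 S1).
      - rewrite plus_INR in S0, S1. simpl in S0, S1. fold K in S0, S1.
        apply (odd_pair_hi K L b _ _ _ Hb HP HL ltac:(apply J0) ltac:(apply J2) S0 S1). }
    assert (Ind : forall p q, (p = k /\ q = k+1 \/ p = k+1 /\ q = k)%nat -> e 0%nat = p ->
              forall n, e n = alt p q n /\ e n = alt p q n).
    { intros p q Hpq H0 n. induction n as [|n [IH _]].
      - unfold alt; simpl; auto.
      - rewrite alt_S. revert IH. unfold alt. destruct (Nat.even n); intro IH;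
        destruct (D1 (S n)); pose proof (D2 n); lia. }
    destruct (D1 0%nat) as [F|F].
    + right. apply functional_extensionality; intro n. apply (Ind k (k+1)%nat); auto.
    + left. apply functional_extensionality; intro n. apply (Ind (k+1)%nat k); auto.
Qed.

Lemma inv_pow_bounds b j s : 1 < b -> 0 < s -> 0 < s / b ^ j <= s.
Proof.
  intros Hb Hs. assert (1 <= b ^ j) by (apply pow_R1_Rle; lra).
  split. apply Rdiv_lt_0_compat; lra.
  unfold Rdiv. rewrite <- (Rmult_1_r s) at 2. apply Rmult_le_compat_l. lra.
  rewrite <- Rinv_1. apply Rinv_le_contravar; lra.
Qed.

Lemma pow_S_div b j s : 1 < b -> b * (s / b ^ (S j)) = s / b ^ j.
Proof. intros. simpl. field. split. apply pow_nonzero; lra. lra. Qed.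

Lemma part2_even m k b : m = (2 * k)%nat -> (1 <= k)%nat ->
  b^2 - (INR k + 1) * b - INR k > 0 -> 1 < b -> b <= 2 * INR k + 1 ->
  at_least_countable (Sset b m).
Proof.
  intros Hm Hk HQ Hb Hb2.
  set (K := INR k) in *.
  assert (HK : 1 <= K) by (unfold K; apply (le_INR 1); auto).
  assert (HmK : INR m = 2 * K) by (rewrite Hm, mult_INR; simpl; unfold K; ring).
  assert (Hb1 : K + 1 < b) by nra.
  assert (Hbm : b <= INR m + 1) by lra.
  pose proof (Lb_eq b m Hb) as HL. rewrite HmK in HL. set (L := Lb b m) in *.
  set (t := K / (b - 1)).
  assert (Ht : t * (b - 1) = K) by (unfold t; field; lra).
  set (a := 1 / (b + 1)).
  assert (Ha : a * (b + 1) = 1) by (unfold a; field; lra).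
  assert (Ha0 : 0 < a) by (unfold a; apply Rdiv_lt_0_compat; lra).
  assert (Hta : (t + a) * (b - 1) < 1 * (b - 1)).
  { assert ((t + a) * (b - 1) * (b + 1) < (b - 1) * (b + 1)).
    { replace ((t + a) * (b - 1) * (b + 1)) with (K * (b + 1) + (b - 1) * (a * (b+1)))
        by (rewrite <- Ht; ring). rewrite Ha. nra. }
    apply Rmult_lt_reg_r with (b + 1); lra. }
  assert (HLa : L * (b - 1) < (t - a) * (b - 1)).
  { replace ((t - a) * (b - 1)) with (2 * (t * (b - 1)) - (t + a) * (b - 1)) by ring.
    rewrite Ht, HL. lra. }
  set (f := fun i n => if (n <? i)%nat then k else if Nat.even (n - i) then (k+1)%nat else (k-1)%nat).
  set (y := fun i n => if (n <? i)%nat then t + a / b ^ (i - n) else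
                       if Nat.even (n - i) then t + a else t - a).
  assert (Hdig : forall i, digits m (f i)).
  { intros i n. unfold f. destruct (n <? i)%nat; [|destruct (Nat.even (n - i))]; lia. }
  assert (Hgood : forall i, goodJ b m (f i)).
  { intro i. apply goodJ_orbit with (y i); auto.
    - intro n. unfold f, y. destruct (Nat.ltb_spec n i).
      + assert (E : (b * (a / b ^ (i - n)) = a / b ^ (i - S n))).
        { replace (i - n)%nat with (S (i - S n)) by lia. apply pow_S_div; auto. }
        destruct (Nat.ltb_spec (S n) i).
        * fold K. nra.
        * replace (i - S n)%nat with 0%nat in E by lia. replace (S n - i)%nat with 0%nat by lia.
          simpl in E |- *. fold K. nra.
      + replace (S n <? i)%nat with false by (symmetry; apply Nat.ltb_ge; lia).
        replace (S n - i)%nat with (S (n - i)) by lia. rewrite even_S.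
        destruct (Nat.even (n - i)); simpl.
        * rewrite plus_INR. simpl. fold K. nra.
        * rewrite minus_INR by lia. simpl. fold K. nra.
    - intro n. change (Lb b m) with L. unfold y.
      destruct (n <? i)%nat.
      + pose proof (inv_pow_bounds b (i - n) a Hb Ha0).
        split; apply lt_by_mul with b; auto; nra.
      + destruct (Nat.even (n - i)); split; apply lt_by_mul with b; auto; nra. }
  exists f. split.
  - intros i j E.
    assert (Hij : forall i j, (i < j)%nat -> f i i <> f j i).
    { intros i' j' h. unfold f. rewrite Nat.ltb_irrefl, Nat.sub_diag.
      replace (i' <? j')%nat with true by (symmetry; apply Nat.ltb_lt; lia). simpl. lia. }
    destruct (lt_eq_lt_dec i j) as [[h|h]|h]; auto.
    + exfalso. apply (Hij i j h). rewrite E. reflexivity.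
    + exfalso. apply (Hij j i h). rewrite E. reflexivity.
  - intro i. apply (proj2 (KeyS b m _ Hb Hbm (Hdig i))). auto.
Qed.

Fixpoint c4 (k q : nat) : nat :=
  match q with
  | O => (k+1)%nat | 1 => (k+1)%nat | 2 => k | 3 => k
  | S (S (S (S q'))) => c4 k q'
  end.

Fixpoint u4 (p0 p1 : R) (q : nat) : R :=
  match q with
  | O => p0 | 1 => p1 | 2 => - p0 | 3 => - p1
  | S (S (S (S q'))) => u4 p0 p1 q'
  end.

Lemma c4_le k q : (c4 k q <= k + 1)%nat.
Proof.
  assert (forall q, (c4 k q <= k+1 /\ c4 k (S q) <= k+1 /\ c4 k (S (S q)) <= k+1
     /\ c4 k (S (S (S q))) <= k+1)%nat); [|apply H].
  clear q; intro q; induction q as [|q IH]. simpl; lia. destruct IH as [? [? [? ?]]]. simpl in *. lia.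
Qed.

Lemma u4_bound p0 p1 q : 0 <= p1 <= p0 -> - p0 <= u4 p0 p1 q <= p0.
Proof.
  intros Hp.
  assert (forall q, (- p0 <= u4 p0 p1 q <= p0) /\ (- p0 <= u4 p0 p1 (S q) <= p0) /\
     (- p0 <= u4 p0 p1 (S (S q)) <= p0) /\ (- p0 <= u4 p0 p1 (S (S (S q))) <= p0)); [|apply H].
  clear q; intro q; induction q as [|q IH]. simpl; lra. destruct IH as [? [? [? ?]]]. simpl in *. lra.
Qed.

Lemma cyc_rec k K b p0 p1 : INR k = K -> b * p0 = 1/2 + p1 -> b * p1 = 1/2 - p0 ->
  forall q, b * u4 p0 p1 q = INR (c4 k q) - K - 1/2 + u4 p0 p1 (S q).
Proof.
  intros HK H0 H1.
  assert (forall q, let R q := b * u4 p0 p1 q = INR (c4 k q) - K - 1/2 + u4 p0 p1 (S q) in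
     R q /\ R (S q) /\ R (S (S q)) /\ R (S (S (S q)))); [|apply H].
  intro q. induction q as [|q IH]; simpl.
  - rewrite plus_INR, HK. simpl. lra.
  - destruct IH as [? [? [? ?]]]. simpl in *. auto.
Qed.

Lemma part2_odd m k b : m = (2 * k + 1)%nat -> (1 <= k)%nat ->
  0 < Pc (INR k) b -> INR k + 1 < b -> b <= 2 * INR k + 2 ->
  at_least_countable (Sset b m).
Proof.
  intros Hm Hk HP Hb1 Hb2.
  set (K := INR k) in *.
  assert (HK : 1 <= K) by (unfold K; apply (le_INR 1); auto).
  assert (HmK : INR m = 2 * K + 1) by (rewrite Hm, plus_INR, mult_INR; simpl; unfold K; ring).
  assert (Hb : 1 < b) by lra. assert (Hbm : b <= INR m + 1) by lra.
  pose proof (Lb_eq b m Hb) as HL. rewrite HmK in HL. set (L := Lb b m) in *.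
  replace (2 * K + 1 + 1 - b) with (2 * K + 2 - b) in HL by ring.
  set (t := (2 * K + 1) / (2 * (b - 1))).
  assert (Ht : t * (b - 1) = K + 1/2) by (unfold t; field; lra).
  set (a := 1 / (2 * (b + 1))).
  assert (Ha : a * (b + 1) = 1/2) by (unfold a; field; lra).
  assert (Ha0 : 0 < a) by (unfold a; apply Rdiv_lt_0_compat; lra).
  assert (Hq : 0 < b^2 + 1) by nra.
  set (p0 := (b + 1) / (2 * (b^2 + 1))).
  set (p1 := (b - 1) / (2 * (b^2 + 1))).
  assert (Hp0 : p0 * (2 * (b^2 + 1)) = b + 1) by (unfold p0; field; lra).
  assert (Hp1 : p1 * (2 * (b^2 + 1)) = b - 1) by (unfold p1; field; lra).
  assert (E0 : b * p0 = 1/2 + p1) by (unfold p0, p1; field; lra).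
  assert (E1 : b * p1 = 1/2 - p0) by (unfold p0, p1; field; lra).
  assert (Hp1p : 0 < p1) by (unfold p1; apply Rdiv_lt_0_compat; lra).
  assert (Hp10 : p1 < p0) by (unfold p0, p1; apply Rmult_lt_compat_r; [apply Rinv_0_lt_compat; lra| lra]).
  assert (Hap : a < p0).
  { apply Rmult_lt_reg_r with (2 * (b^2 + 1) * (b + 1)). nra.
    replace (a * (2 * (b ^ 2 + 1) * (b + 1))) with (a * (b + 1) * (2 * (b ^ 2 + 1))) by ring.
    replace (p0 * (2 * (b ^ 2 + 1) * (b + 1))) with (p0 * (2 * (b ^ 2 + 1)) * (b + 1)) by ring.
    rewrite Ha, Hp0. nra. }
  assert (Htp : (t + p0) * (b - 1) < 1 * (b - 1)).
  { apply Rmult_lt_reg_r with (2 * (b^2 + 1)). nra.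
    replace ((t + p0) * (b - 1) * (2 * (b ^ 2 + 1))) with
       (t * (b - 1) * (2 * (b ^ 2 + 1)) + p0 * (2 * (b ^ 2 + 1)) * (b - 1)) by ring.
    rewrite Ht, Hp0. unfold Pc in HP. nra. }
  assert (HLp : L * (b - 1) < (t - p0) * (b - 1)).
  { replace ((t - p0) * (b - 1)) with (2 * (t * (b - 1)) - (t + p0) * (b - 1)) by ring.
    rewrite Ht, HL. lra. }
  set (d := p0 - a).
  set (f := fun i n => if (n <? 2 * i)%nat then (if Nat.even n then (k+1)%nat else k)
                       else c4 k (n - 2 * i)).
  set (u := fun i n => if (n <? 2 * i)%nat then (if Nat.even n then a else - a) + d / b ^ (2 * i - n)
                       else u4 p0 p1 (n - 2 * i)).
  assert (Hdig : forall i, digits m (f i)).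
  { intros i n. unfold f. pose proof (c4_le k (n - 2 * i)).
    destruct (n <? 2 * i)%nat; [destruct (Nat.even n)|]; lia. }
  assert (Hub : forall i n, - p0 <= u i n <= p0).
  { intros i n. unfold u. destruct (n <? 2 * i)%nat.
    - assert (0 < d) by (unfold d; lra).
      pose proof (inv_pow_bounds b (2 * i - n) d Hb H). unfold d in *.
      destruct (Nat.even n); lra.
    - apply u4_bound. lra. }
  assert (Hgood : forall i, goodJ b m (f i)).
  { intro i. apply goodJ_orbit with (fun n => t + u i n); auto.
    - intro n. assert (Hbt : b * t = t + K + 1/2) by lra.
      unfold f, u. destruct (Nat.ltb_spec n (2 * i)).
      + assert (E : (b * (d / b ^ (2 * i - n)) = d / b ^ (2 * i - S n))).
        { replace (2 * i - n)%nat with (S (2 * i - S n)) by lia. apply pow_S_div; auto. }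
        assert (Hu : (if (S n <? 2 * i)%nat then (if Nat.even (S n) then a else - a) + d / b ^ (2 * i - S n)
             else u4 p0 p1 (S n - 2 * i)) = (if Nat.even (S n) then a else - a) + d / b ^ (2 * i - S n)).
        { destruct (Nat.ltb_spec (S n) (2 * i)); auto.
          replace (S n - 2 * i)%nat with 0%nat by lia. replace (2 * i - S n)%nat with 0%nat by lia.
          replace (Nat.even (S n)) with true
            by (replace (S n) with (2 * i)%nat by lia; rewrite Nat.even_mul; reflexivity).
          simpl. unfold d. field. }
        rewrite Hu, even_S. destruct (Nat.even n); cbn [negb].
        * rewrite plus_INR, INR_1. fold K.
          assert (b * a = 1/2 - a) by lra. 
          replace (b * (t + (a + d / b ^ (2 * i - n)))) with (b * t + b * a + b * (d / b ^ (2 * i - n))) by ring.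
          lra.
        * fold K. assert (b * a = 1/2 - a) by lra. 
          replace (b * (t + (- a + d / b ^ (2 * i - n)))) with (b * t - b * a + b * (d / b ^ (2 * i - n))) by ring.
          lra.
      + replace (S n <? 2 * i)%nat with false by (symmetry; apply Nat.ltb_ge; lia).
        replace (S n - 2 * i)%nat with (S (n - 2 * i)) by lia.
        pose proof (cyc_rec k K b p0 p1 eq_refl E0 E1 (n - 2 * i)). lra.
    - intro n. change (Lb b m) with L. pose proof (Hub i n).
      split; apply lt_by_mul with b; auto; nra. }
  exists f. split.
  - intros i j E.
    assert (Hij : forall i j, (i < j)%nat -> f i (2 * i + 1)%nat <> f j (2 * i + 1)%nat).
    { intros i' j' h. unfold f.
      replace (2 * i' + 1 <? 2 * i')%nat with false by (symmetry; apply Nat.ltb_ge; lia).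
      replace (2 * i' + 1 <? 2 * j')%nat with true by (symmetry; apply Nat.ltb_lt; lia).
      replace (2 * i' + 1 - 2 * i')%nat with 1%nat by lia.
      rewrite Nat.even_add, Nat.even_mul. simpl. lia. }
    destruct (lt_eq_lt_dec i j) as [[h|h]|h]; auto.
    + exfalso. apply (Hij i j h). rewrite E. reflexivity.
    + exfalso. apply (Hij j i h). rewrite E. reflexivity.
  - intro i. apply (proj2 (KeyS b m _ Hb Hbm (Hdig i))). auto.
Qed.

Lemma root_gt K y : 0 <= K -> Pc K y = 0 -> K + 1 < y.
Proof.
  intros HK H. unfold Pc in H. destruct (Rlt_le_dec (K+1) y) as [h|h]; auto. exfalso.
  assert (0 <= y^2 * (K + 2 - y)) by (apply Rmult_le_pos; nra). nra.
Qed.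

Lemma P_le_lt K b : Pc K b <= 0 -> K + 1 < b -> b < K + 2.
Proof.
  intros HP Hb. unfold Pc in HP. destruct (Rlt_le_dec b (K+2)) as [h|h]; auto. exfalso.
  assert (0 <= b^2 * (b - (K + 2))) by (apply Rmult_le_pos; nra). nra.
Qed.

Theorem proposition4p7 (m : nat) (bf : R) :
  (2 <= m)%nat -> is_beta_f m bf ->
  (forall beta, Gm m < beta <= bf ->
     (Nat.even m = true -> card_is_one (Sset beta m)) /\
     (Nat.even m = false -> card_is_two (Sset beta m))) /\
  (forall beta, bf < beta <= INR m + 1 ->
     at_least_countable (Sset beta m)).
Proof.
  intros Hm2 Hbf.
  unfold is_beta_f, Gm in *. cbv zeta in *.
  set (k := Nat.div2 m) in *.
  assert (HK0 : 0 <= INR k) by apply pos_INR.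
  destruct (Nat.even m) eqn:Hev.
  - pose proof (m_even m Hev) as Hm. fold k in Hm.
    assert (Hk : (1 <= k)%nat) by lia.
    assert (HK : 1 <= INR k) by (apply (le_INR 1); auto).
    assert (HmK : INR m = 2 * INR k) by (rewrite Hm, mult_INR; simpl; ring).
    set (s := sqrt (INR k ^ 2 + 6 * INR k + 1)) in *.
    assert (Hs0 : 0 <= s) by apply sqrt_pos.
    assert (Hss : s * s = INR k ^ 2 + 6 * INR k + 1) by (apply sqrt_sqrt; nra).
    split.
    + intros b [Hb1 Hb2]. split; [|discriminate].
      intros _. subst bf. destruct (even_Q_le (INR k) s b HK Hs0 Hss Hb1 Hb2) as [HQ Hb3].
      apply (part1_even m k b Hm Hk Hb1 HQ Hb3).
    + intros b [Hb1 Hb2]. subst bf.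
      pose proof (even_Q_gt (INR k) s b HK Hs0 Hss Hb1).
      apply (part2_even m k b Hm Hk H); lra.
  - pose proof (m_odd m Hev) as Hm. fold k in Hm.
    assert (Hk : (1 <= k)%nat) by lia.
    assert (HK : 1 <= INR k) by (apply (le_INR 1); auto).
    assert (HmK : INR m = 2 * INR k + 1) by (rewrite Hm, plus_INR, mult_INR; simpl; ring).
    destruct Hbf as [Hbf0 Hbfmax].
    change (Pc (INR k) bf = 0) in Hbf0.
    change (forall y, Pc (INR k) y = 0 -> y <= bf) in Hbfmax.
    pose proof (root_gt (INR k) bf HK0 Hbf0) as Hbfk.
    split.
    + intros b [Hb1 Hb2]. split; [discriminate|]. intros _.
      set (s := sqrt (INR k ^ 2 + 6 * INR k + 5)) in *.
      assert (Hs0 : 0 <= s) by apply sqrt_pos.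
      assert (Hss : s * s = INR k ^ 2 + 6 * INR k + 5) by (apply sqrt_sqrt; nra).
      destruct (odd_H1 (INR k) s b HK0 Hs0 Hss Hb1) as [H1 Hb3].
      pose proof (odd_P_le (INR k) b bf HK0 Hbf0 Hb3 Hb2) as HP.
      assert (Hb4 : INR k + 1 < b) by lra.
      pose proof (P_le_lt (INR k) b HP Hb4).
      apply (part1_odd m k b Hm Hk H1 HP Hb4 H).
    + intros b [Hb1 Hb2].
      assert (Hb4 : INR k + 1 < b) by lra.
      pose proof (odd_P_gt (INR k) b bf HK0 Hbfmax Hb1 Hb4).
      apply (part2_odd m k b Hm Hk H Hb4). lra.
Qed.
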